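(* Let $a,b,\alpha_1,\beta_1,\alpha_2,\beta_2\in\mathbb C$ and let $p,k\ge0$ be integers. Let $\mathbf F(x,y)=\prod_{j=0}^{p-1}(\alpha_1x+j-y+\beta_1)(\alpha_2x+j-y+\beta_2)$. Then the coefficient of $x^{2p}$ in the polynomial $\widetilde{\mathcal T}_k^{a,b}[(\mathbf F(x,i))_{i}]$ does not depend on $\beta_1,\beta_2$, and equals $$\sum_{j=0}^k\frac{k!}{(k-j)!}\sum_{i=0}^{p}\binom{p}{i}\binom{p}{2p-j-i}\alpha_1^i\alpha_2^{2p-i-j}\prod_{r=0}^{k-j-1}(a-b+j+r).$$
   Context: For integers $0\le i\le k$, $P_i^k(x;a,b):=\prod_{j=0}^{k-i-1}(x+j+a)\prod_{j=0}^{i-1}(x-j+b)$. For a sequence of polynomials $(a_i(x))_{i\ge0}$, $\widetilde{\mathcal T}_k^{a,b}[(a_i(x))_i]:=(-1)^k\sum_{i=0}^k(-1)^{k-i}\binom{k}{i}P_i^k(x;a,b)\,a_i(x)$. Binomial coefficients $\binom{p}{m}$ are $0$ for $m<0$ or $m>p$. *)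

(* Defs.v *)
From HB Require Import structures.
From mathcomp Require Import all_boot all_order all_algebra.
Set Implicit Arguments. Unset Strict Implicit. Unset Printing Implicit Defensive.
Import Order.TTheory GRing.Theory Num.Theory.
Local Open Scope ring_scope.

Definition Pik {C : comRingType} (i k : nat) (a b : C) : {poly C} :=
  (\prod_(j < k - i) ('X + (j%:R + a)%:P)) * (\prod_(j < i) ('X + (b - j%:R)%:P)).

Definition Ttilde {C : comRingType} (k : nat) (a b : C) (s : nat -> {poly C}) : {poly C} :=
  (-1) ^+ k * \sum_(i < k.+1)
     ((-1) ^+ (k - i) * ('C(k, i))%:R * Pik i k a b * s i).

Definition Fpoly {C : comRingType} (al1 be1 al2 be2 : C) (p : nat) (y : C) : {poly C} :=
  \prod_(j < p) ((al1 *: 'X + (j%:R - y + be1)%:P) * (al2 *: 'X + (j%:R - y + be2)%:P)).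

(* Main.v *)
Require Import Defs.
From HB Require Import structures.
From mathcomp Require Import all_boot all_order all_algebra.
From mathcomp Require Import ring lra zify.
Set Implicit Arguments. Unset Strict Implicit. Unset Printing Implicit Defensive.
Import Order.TTheory GRing.Theory Num.Theory.
Local Open Scope ring_scope.

Section FF.
Variable R : comRingType.
Definition ff (u : R) (m : nat) : R := \prod_(r < m) (u - r%:R).

Lemma ff0 u : ff u 0 = 1. Proof. by rewrite /ff big_ord0. Qed.
Lemma ffS u m : ff u m.+1 = ff u m * (u - m%:R).
Proof. by rewrite /ff big_ord_recr. Qed.

Lemma vandermonde n u w :
  \sum_(l < n.+1) 'C(n, l)%:R * ff u (n - l) * ff w l = ff (u + w) n.
Proof.
elim: n => [|n IH]; first by rewrite big_ord1 /ff !big_ord0 bin0 !mulr1.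
rewrite ffS -IH mulr_suml.
have E : forall l : 'I_n.+1, 'C(n, l)%:R * ff u (n - l) * ff w l * (u + w - n%:R)
   = 'C(n, l)%:R * ff u (n.+1 - l) * ff w l + 'C(n, l)%:R * ff u (n - l) * ff w l.+1.
  move=> l; have hl : (l <= n)%N by rewrite -ltnS.
  rewrite subSn // !ffS.
  have -> : (n%:R : R) = (n - l)%N%:R + l%:R by rewrite -natrD subnK.
  ring.
rewrite (eq_bigr _ (fun l _ => E l)) big_split /=.
rewrite big_ord_recl /= bin0 subn0.
rewrite [in RHS]big_ord_recl /= bin0 subn0 -addrA; congr (_ + _).
under eq_bigr do rewrite binS natrD mulrDl mulrDl.
rewrite big_split /=; congr (_ + _).
rewrite [in LHS]big_ord_recr /= bin_small // mul0r mul0r addr0.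
apply: eq_bigr => i _; by rewrite /bump /= add1n subSS.
Qed.
End FF.

Section Rep.
Variable C : comNzRingType.
Variables al ga : nat -> C.

Lemma coef_lin (a d : C) (c : {poly C}) m :
  ((a *: 'X + d%:P) * c)`_m = (if m is m'.+1 then a * c`_m' else 0) + d * c`_m.
Proof.
rewrite mulrDl coefD -scalerAl coefZ coefXM coefCM; case: m => [|m] /=; rewrite ?mulr0.
all: by [].
Qed.

Fixpoint cc (n j : nat) : {poly C} := match n with
 | 0 => ((j == 0%N)%:R)%:P
 | n'.+1 => (al n' *: 'X + (ga n' - j%:R)%:P) * cc n' j - (if j is j'.+1 then cc n' j' else 0)
 end.

Definition Q n : {poly C} := \prod_(t < n) (al t *: 'X - 1).

Lemma cc_coef0 n j m : (n < j + m)%N -> (cc n j)`_m = 0.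
Proof.
elim: n j m => [|n IH] j m /=.
  rewrite coefC; case: m => [|m]; last by [].
  by case: j.
move=> h; rewrite coefB coef_lin.
have -> : (cc n j)`_m = 0 by apply: IH; lia.
rewrite mulr0 addr0.
case: m h => [|m] h.
  case: j h => [|j] h /=.
    by []. by rewrite IH ?subr0 //; lia.
rewrite IH; last lia.
case: j h => [|j] h /=; first by rewrite coef0 mulr0 subr0.
by rewrite IH ?mulr0 ?subr0 //; lia.
Qed.

Lemma Q_small n m : (n < m)%N -> (Q n)`_m = 0.
Proof.
elim: n m => [|n IH] m h.
  by rewrite /Q big_ord0 coefC; case: m h.
rewrite /Q big_ord_recr /= -/(Q n) mulrDr mulrN mulr1 coefB -scalerAr coefZ coefMX.
rewrite IH; last lia.
case: m h => [|m] h //=; rewrite IH; last lia.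
by rewrite mulr0 subr0.
Qed.

Lemma cc_top n j : (j <= n)%N -> (cc n j)`_(n - j) = (Q n)`_(n - j).
Proof.
elim: n j => [|n IH] j h.
  by case: j h => // _; rewrite /Q big_ord0.
rewrite /= /Q big_ord_recr /= -/(Q n).
rewrite mulrBr mulr1 [in RHS]coefB -scalerAr coefZ coefMX.
rewrite coefB coef_lin.
rewrite (@cc_coef0 n j (n.+1 - j)); last lia.
rewrite mulr0 addr0.
case: (ltngtP j n.+1) h => // hj _.
  rewrite subSn; last lia.
  rewrite /= IH; last lia.
  case: j hj => [|j] hj.
    by rewrite subn0 coef0 (@Q_small n n.+1).
  have -> : (n - j.+1).+1 = (n - j)%N by lia.
  rewrite IH //; lia.
rewrite hj subnn /=.
by rewrite mulr0 -(subnn n) IH.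
Qed.

Definition G n (y : C) : {poly C} := \prod_(t < n) (al t *: 'X + (ga t - y)%:P).

Lemma cc_big n j : (n < j)%N -> cc n j = 0.
Proof. move=> h; apply/polyP => m; rewrite coef0 cc_coef0 //; lia. Qed.

Lemma G_rep n y : G n y = \sum_(j < n.+1) ff y j *: cc n j.
Proof.
elim: n => [|n IH].
  by rewrite /G big_ord0 big_ord1 ff0 scale1r /=.
rewrite /G big_ord_recr /= -/(G n y) IH mulr_suml.
have E : forall j : 'I_n.+1, ff y j *: cc n j * (al n *: 'X + (ga n - y)%:P)
   = ff y j *: ((al n *: 'X + (ga n - j%:R)%:P) * cc n j) - ff y j.+1 *: cc n j.
  move=> j; rewrite ffS.
  have -> : (ga n - y)%:P = (ga n - j%:R)%:P - (y - j%:R)%:P by rewrite -polyCB; congr (_%:P); ring.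
  rewrite mulrC -!mul_polyC polyCM; ring.
rewrite (eq_bigr _ (fun j _ => E j)) sumrB.
rewrite [in RHS]big_ord_recr /= cc_big // mulr0 sub0r scalerN.
under [in RHS]eq_bigr do rewrite scalerBr.
rewrite sumrB -addrA; congr (_ + _); rewrite -opprD; congr (- _).
rewrite [in RHS]big_ord_recl /= scaler0 add0r big_ord_recr /=; congr (_ + _).
Qed.
End Rep.

Lemma binffact j n l : ('C(j + n, j + l) * (j + l) ^_ j = (j + n) ^_ j * 'C(n, l))%N.
Proof.
case: (leqP l n) => hl; last by rewrite !bin_small ?muln0 ?mul0n //; lia.
have hpos : (0 < l`! * (n - l)`!)%N by rewrite muln_gt0 !fact_gt0.
apply/eqP; rewrite -(eqn_pmul2r hpos); apply/eqP.
have e1 : ((j + l) ^_ j * l`! = (j + l)`!)%N.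
  by have := ffact_fact (leq_addr l j); rewrite addKn.
have e2 : ((j + n) ^_ j * n`! = (j + n)`!)%N.
  by have := ffact_fact (leq_addr n j); rewrite addKn.
have e3 : ('C(j + n, j + l) * ((j + l)`! * (n - l)`!) = (j + n)`!)%N.
  have h : (j + l <= j + n)%N by rewrite leq_add2l.
  by have := bin_fact h; rewrite subnDl.
rewrite -mulnA [X in (_ * X)%N]mulnA e1 e3.
by rewrite -mulnA bin_fact // e2.
Qed.

Section TA.
Variable C : comNzRingType.

Lemma sgn2 (R : pzRingType) n : (-1) ^+ n * (-1) ^+ n = 1 :> R.
Proof. by rewrite -exprD addnn -mul2n exprM expr2 mulrNN mulr1 expr1n. Qed.

Lemma Rpart n (a : C) : \prod_(r < n) ('X + (r%:R + a)%:P) = (-1) ^+ n * ff (-('X + a%:P)) n.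
Proof.
rewrite /ff.
have -> : \prod_(r < n) (- ('X + a%:P) - r%:R) = \prod_(r < n) - ('X + (r%:R + a)%:P).
  by apply: eq_bigr => r _; rewrite polyCD polyC_natr; ring.
by rewrite prodrN card_ord mulrA (sgn2 _ n) mul1r.
Qed.

Lemma Spart i (b : C) : \prod_(r < i) ('X + (b - r%:R)%:P) = ff ('X + b%:P) i.
Proof. by apply: eq_bigr => r _; rewrite polyCB polyC_natr addrA. Qed.

Lemma ffsplit (R : comNzRingType) (u : R) j l : ff u (j + l) = ff u j * ff (u - j%:R) l.
Proof.
rewrite /ff big_split_ord /=; congr (_ * _).
by apply: eq_bigr => r _; rewrite /= natrD opprD addrA.
Qed.

Lemma ffC (c : C) n : ff (c%:P) n = (ff c n)%:P.
Proof. by rewrite /ff rmorph_prod; apply: eq_bigr => r _; rewrite /= polyCB polyC_natr. Qed.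

Lemma ffneg (c : C) n : ff c n = (-1) ^+ n * \prod_(r < n) (- c + r%:R).
Proof.
have -> : \prod_(r < n) (- c + r%:R) = \prod_(r < n) - (c - r%:R).
  by apply: eq_bigr => r _; rewrite opprB addrC.
by rewrite prodrN card_ord mulrA (sgn2 _ n) mul1r.
Qed.

Lemma TA k j (a b : C) : (j <= k)%N ->
  (-1) ^+ k * \sum_(i < k.+1) ((-1) ^+ (k - i) * ('C(k, i))%:R * Pik i k a b * (((i ^_ j)%N)%:R)%:P)
  = ((-1) ^+ j * ((k ^_ j)%N)%:R * \prod_(r < k - j) (a - b + j%:R + r%:R))%:P * ff ('X + b%:P) j.
Proof.
move=> hjk; have [n ->] : exists n, k = (j + n)%N by exists (k - j)%N; rewrite subnKC.
rewrite addKn -addnS big_split_ord /= big1 ?add0r; last first.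
  by move=> i _; rewrite /= ffact_small // polyC0 mulr0.
have T : forall l : 'I_n.+1,
   (-1) ^+ (j + n - (j + l)) * ('C(j + n, j + l))%:R * Pik (j + l) (j + n) a b
     * ((((j + l) ^_ j)%N)%:R)%:P
   = (((j + n) ^_ j)%N)%:R * ff ('X + b%:P) j *
     (('C(n, l))%:R * ff (- ('X + a%:P)) (n - l) * ff ('X + b%:P - j%:R) l).
  move=> l; rewrite subnDl /Pik subnDl Rpart Spart ffsplit polyC_natr.
  have hb := congr1 (fun m => m%:R : {poly C}) (binffact j n l).
  rewrite /= !natrM in hb.
  have hs := sgn2 [the pzRingType of {poly C}] (n - l).
  transitivity (((-1) ^+ (n - l) * (-1) ^+ (n - l)) *
     (('C(j + n, j + l))%:R * (((j + l) ^_ j)%N)%:R) *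
     (ff ('X + b%:P) j * ff (- ('X + a%:P)) (n - l) * ff ('X + b%:P - j%:R) l)); first ring.
  rewrite hs hb; ring.
rewrite (eq_bigr _ (fun l _ => T l)) /= -mulr_sumr vandermonde.
have -> : - ('X + a%:P) + ('X + b%:P - j%:R) = (b - a - j%:R)%:P :> {poly C}.
  rewrite polyCB polyCB polyC_natr; ring.
rewrite ffC ffneg !polyCM polyC_natr rmorphXn rmorphN1 /= rmorphXn rmorphN1 /=.
have -> : \prod_(r < n) (- (b - a - j%:R) + r%:R) = \prod_(r < n) (a - b + j%:R + r%:R).
  by apply: eq_bigr => r _; ring.
rewrite exprD.
have hs := sgn2 [the pzRingType of {poly C}] n.
transitivity ((-1) ^+ j * ((-1) ^+ n * (-1) ^+ n) * (((j + n) ^_ j)%N)%:R *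
   (\prod_(r < n) (a - b + j%:R + r%:R))%:P * ff ('X + b%:P) j); first ring.
rewrite hs; ring.
Qed.

End TA.

Section Final.
Variable C : comNzRingType.

Lemma ffnat (i j : nat) : ff (i%:R : C) j = ((i ^_ j)%N)%:R.
Proof.
elim: j => [|j IH]; first by rewrite ff0.
rewrite ffS IH ffactnSr natrM.
case: (leqP j i) => h; first by rewrite natrB.
by rewrite ffact_small // mulr0n !mul0r.
Qed.

Lemma ff_monic (b : C) j : ff ('X + b%:P) j \is monic /\ size (ff ('X + b%:P) j) = j.+1.
Proof.
elim: j => [|j [m s]]; first by rewrite ff0 monic1 size_poly1.
rewrite ffS.
have -> : 'X + b%:P - j%:R = 'X - (j%:R - b)%:P :> {poly C}.
  by rewrite polyCB polyC_natr; ring.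
split; first by rewrite monicMr ?monicXsubC.
rewrite size_Mmonic ?monicXsubC ?s ?size_XsubC ?addn2 //.
by rewrite -size_poly_eq0 s.
Qed.

Lemma coef_monic_mul (c q : {poly C}) m d :
  (forall i, (m < i)%N -> c`_i = 0) -> q \is monic -> size q = d.+1 ->
  (q * c)`_(d + m) = c`_m.
Proof.
move=> hc mq sq.
have hd : (d < (d + m).+1)%N by lia.
rewrite coefM (bigD1 (Ordinal hd)) //= big1 ?addr0.
  have -> : q`_d = 1 by move/monicP: mq; rewrite lead_coefE sq.
  by rewrite mul1r addKn.
move=> i hi; have hi' : (nat_of_ord i != d) by apply: contra hi => /eqP h; apply/eqP/val_inj.
case: (ltngtP i d) => h; last by rewrite h eqxx in hi'.
  by rewrite hc ?mulr0 //; lia.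
by rewrite nth_default ?mul0r // sq.
Qed.

Lemma coefpow (al : C) p m : ((al *: 'X - 1) ^+ p)`_m = (-1) ^+ (p - m) * ('C(p, m))%:R * al ^+ m.
Proof.
elim: p m => [|p IH] m.
  by rewrite expr0 coefC; case: m => [|m]; rewrite ?bin0 ?mulr1 // bin0n mulr0 mul0r.
rewrite exprSr mulrBr mulr1 coefB -scalerAr coefZ coefMX.
case: m => [|m] /=.
  by rewrite IH !bin0 !subn0 exprS; ring.
rewrite !IH binS natrD subSS exprS.
case: (leqP m.+1 p) => h.
  have -> : (p - m = (p - m.+1).+1)%N by lia.
  rewrite exprS; ring.
rewrite (bin_small h) mulr0n.
case: (ltngtP p m) h => hpm h.
  by rewrite bin_small // mulr0n; ring.
  lia.
rewrite hpm subnn; have -> : (m - m.+1 = 0)%N by lia.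
ring.
Qed.

Lemma LHSform al ga k (a b : C) N :
  Ttilde k a b (fun i => G al ga N i%:R) =
  \sum_(j < N.+1) ((if (j <= k)%N then ((-1) ^+ j * ((k ^_ j)%N)%:R *
       \prod_(r < k - j) (a - b + j%:R + r%:R))%:P * ff ('X + b%:P) j else 0) * cc al ga N j).
Proof.
rewrite /Ttilde.
under eq_bigr => i _ do rewrite G_rep mulr_sumr.
rewrite exchange_big mulr_sumr /=; apply: eq_bigr => j _.
under eq_bigr => i _ do rewrite ffnat -mul_polyC mulrA.
rewrite -mulr_suml mulrA; congr (_ * _).
case: ifP => hj; first by rewrite TA.
rewrite big1 ?mulr0 // => i _; rewrite ffact_small ?polyC0 ?mulr0 //.
move/negbT: hj; rewrite -ltnNge; have := ltn_ord i; lia.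
Qed.

Lemma LHScoef al ga k (a b : C) N :
  (Ttilde k a b (fun i => G al ga N i%:R))`_N =
  \sum_(j < N.+1) (if (j <= k)%N then (-1) ^+ j * ((k ^_ j)%N)%:R *
       \prod_(r < k - j) (a - b + j%:R + r%:R) * (Q al N)`_(N - j) else 0).
Proof.
rewrite LHSform coef_sum; apply: eq_bigr => j _.
case: ifP => hj; last by rewrite mul0r coef0.
rewrite -mulrA coefCM; congr (_ * _).
have hjN : (j <= N)%N by rewrite -ltnS.
have [m s] := ff_monic b j.
have e := @coef_monic_mul (cc al ga N j) (ff ('X + b%:P) j) (N - j) j.
rewrite subnKC // in e; rewrite e //; first by rewrite cc_top.
by move=> i hi; rewrite cc_coef0 //; lia.
Qed.

Lemma coefprod (a1 a2 : C) p j : (j <= p + p)%N ->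
  (-1) ^+ j * ((a1 *: 'X - 1) ^+ p * (a2 *: 'X - 1) ^+ p)`_(p + p - j) =
  \sum_(i < p.+1 | (i + j <= p + p)%N)
     (('C(p, i))%:R * ('C(p, p + p - j - i))%:R * a1 ^+ i * a2 ^+ (p + p - i - j)).
Proof.
move=> hj.
rewrite coefM mulr_sumr.
have h1 : ((p + p - j).+1 <= (p + p).+1)%N by lia.
have h2 : (p.+1 <= (p + p).+1)%N by lia.
rewrite (big_ord_widen _ (fun i => (-1) ^+ j * (((a1 *: 'X - 1) ^+ p)`_i * ((a2 *: 'X - 1) ^+ p)`_(p + p - j - i))) h1).
rewrite (big_ord_widen_cond _ (fun i => (i + j <= p + p)%N)
   (fun i => ('C(p, i))%:R * ('C(p, p + p - j - i))%:R * a1 ^+ i * a2 ^+ (p + p - i - j)) h2).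
rewrite big_mkcond [RHS]big_mkcond; apply: eq_bigr => i _ /=.
case: (leqP i (p + p - j)) => hi.
  rewrite (_ : (i < (p + p - j).+1)%N = true); last by apply/idP; lia.
  rewrite (_ : (i + j <= p + p)%N = true); last by apply/idP; lia.
  rewrite /= !coefpow.
  case: (leqP i p) => hip; last first.
    rewrite (_ : (i < p.+1)%N = false); last by apply/negbTE; lia.
    by rewrite bin_small // mulr0n !mulr0 !mul0r mulr0.
  rewrite (_ : (i < p.+1)%N = true); last by apply/idP; lia.
  rewrite (_ : (p + p - i - j = p + p - j - i)%N); last lia.
  case: (leqP (p + p - j - i) p) => hq; last first.
    by rewrite (@bin_small p _ hq) mulr0n; ring.
  have e : (-1) ^+ (p - i) * (-1) ^+ (p - (p + p - j - i)) = (-1) ^+ j :> C.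
    rewrite -exprD; congr (_ ^+ _); lia.
  have hs' := sgn2 C j.
  transitivity ((-1) ^+ j * ((-1) ^+ (p - i) * (-1) ^+ (p - (p + p - j - i))) *
     (('C(p, i))%:R * ('C(p, p + p - j - i))%:R * a1 ^+ i * a2 ^+ (p + p - j - i))); first ring.
  by rewrite e hs' mul1r.
rewrite (_ : (i < (p + p - j).+1)%N = false); last by apply/negbTE; lia.
by rewrite (_ : (i + j <= p + p)%N = false); last by apply/negbTE; lia.
Qed.

End Final.

Lemma sum_match (R : zmodType) n m (F G : nat -> R) :
  (forall j, (j < n)%N -> (m <= j)%N -> F j = 0) ->
  (forall j, (j < m)%N -> (n <= j)%N -> G j = 0) ->
  (forall j, (j < n)%N -> (j < m)%N -> F j = G j) ->
  \sum_(j < n) F j = \sum_(j < m) G j.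
Proof.
move=> hF hG hFG.
rewrite (big_ord_widen (n + m) F (leq_addr m n)) (big_ord_widen (n + m) G (leq_addl n m)).
rewrite big_mkcond [RHS]big_mkcond; apply: eq_bigr => j _ /=.
case: (ltnP j n) => h1; case: (ltnP j m) => h2 //=.
- by rewrite hFG.
- by rewrite hF.
- by rewrite hG.
Qed.

Unset Implicit Arguments.
Theorem proposition6 (C : numClosedFieldType) (a b al1 be1 al2 be2 : C) (p k : nat) :
  (Ttilde k a b (fun i => Fpoly al1 be1 al2 be2 p i%:R))`_(2 * p) =
  \sum_(j < k.+1)
     ((k`!)%:R / ((k - j)`!)%:R *
      \sum_(i < p.+1 | (i + j <= 2 * p)%N)
         (('C(p, i))%:R * ('C(p, 2 * p - j - i))%:R * al1 ^+ i * al2 ^+ (2 * p - i - j)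
          * \prod_(r < k - j) (a - b + j%:R + r%:R))).
Proof.
pose al := fun t : nat => if (t < p)%N then al1 else al2.
pose ga := fun t : nat => if (t < p)%N then t%:R + be1 else (t - p)%:R + be2.
have HF : forall y, Fpoly al1 be1 al2 be2 p y = G al ga (p + p) y.
  move=> y; rewrite /Fpoly /G big_split_ord big_split /=; congr (_ * _).
    apply: eq_bigr => i _; rewrite /al /ga /= ltn_ord; congr (_ + _%:P); ring.
  apply: eq_bigr => i _; rewrite /al /ga /= ltnNge leq_addr /= addKn; congr (_ + _%:P); ring.
have Text : Ttilde k a b (fun i => Fpoly al1 be1 al2 be2 p i%:R)
          = Ttilde k a b (fun i => G al ga (p + p) i%:R).
  by rewrite /Ttilde; congr (_ * _); apply: eq_bigr => i _; rewrite HF.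
have HQ : Q al (p + p) = (al1 *: 'X - 1) ^+ p * (al2 *: 'X - 1) ^+ p.
  rewrite /Q big_split_ord /=.
  rewrite (eq_bigr (fun _ => al1 *: 'X - 1)); last by move=> i _; rewrite /al /= ltn_ord.
  rewrite [X in _ * X](eq_bigr (fun _ => al2 *: 'X - 1)); last by move=> i _; rewrite /al /= ltnNge leq_addr.
  by rewrite !prodr_const !card_ord.
rewrite mul2n -addnn Text LHScoef HQ.
apply: (@sum_match _ _ _
  (fun j => if (j <= k)%N then (-1) ^+ j * ((k ^_ j)%N)%:R *
       \prod_(r < k - j) (a - b + j%:R + r%:R) *
       ((al1 *: 'X - 1) ^+ p * (al2 *: 'X - 1) ^+ p)`_(p + p - j) else 0)
  (fun j => (k`!)%:R / ((k - j)`!)%:R *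
      \sum_(i < p.+1 | (i + j <= p + p)%N)
         (('C(p, i))%:R * ('C(p, p + p - j - i))%:R * al1 ^+ i * al2 ^+ (p + p - i - j)
          * \prod_(r < k - j) (a - b + j%:R + r%:R)))).
- move=> j _ hj; rewrite ifF //; apply/negbTE; lia.
- move=> j _ hj; rewrite big1 ?mulr0 // => i hi; lia.
move=> j h1 h2; rewrite ifT; last lia.
rewrite -mulr_suml -coefprod; last lia.
have -> : ((k ^_ j)%N)%:R = (k`!)%:R / ((k - j)`!)%:R :> C.
  rewrite -(ffact_fact (_ : (j <= k)%N)); last lia.
  by rewrite natrM mulfK // pnatr_eq0 -lt0n fact_gt0.
ring.
Qed.
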